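(* Let $K,L>0$, let $A(p,q)=(p^2q)^{1/3}$ and $A^\delta(p,q)=\operatorname{sgn}(q)\min\left(\lvert A(p,q)\rvert,K\lvert p\rvert,L\lvert q\rvert\right)$. Define $A^{\delta,+}(p,q)=A^\delta(p^+,q^+)$ and $A^{\delta,-}(p,q)=A^\delta(p^-,q^-)$. Then \[ -A^\delta(p,q)=A^{\delta,+}(\lvert p\rvert,-q)+A^{\delta,-}(-\lvert p\rvert,-q)\quad\text{for all }p,q\in\mathbb R, \] and $A^{\delta,+}\in ND^+(\mathbb R^2)$, $A^{\delta,-}\in ND^-(\mathbb R^2)$.
   Context: Real cube root; $\operatorname{sgn}(q)=q/\lvert q\rvert$ for $q\ne0$ and $\operatorname{sgn}(0)=0$; $x^+=\max(x,0)$, $x^-=\min(x,0)$. For $x,y\in\mathbb R^N$, $x\le y$ means componentwise; $F\in ND(\mathbb R^N)$ means $x\le y\Rightarrow F(x)\le F(y)$; $ND^+(\mathbb R^N)$ (resp. $ND^-(\mathbb R^N)$) are the nondecreasing functions with values in $[0,\infty)$ (resp. $(-\infty,0]$). *)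

(* Defs.v *)
From HB Require Import structures.
From mathcomp Require Import all_boot all_order all_algebra.
From mathcomp Require Import all_classical all_reals all_analysis.
Set Implicit Arguments. Unset Strict Implicit. Unset Printing Implicit Defensive.
Import Order.TTheory GRing.Theory Num.Theory.
Local Open Scope ring_scope.

Section Defs.
Variable R : realType.

(* real cube root: sgn(x) |x|^(1/3)  (powR 0 a = 0 for a <> 0) *)
Definition cbrt (x : R) : R := Num.sg x * powR `|x| (3%:R^-1).

Definition posp (x : R) : R := Num.max x 0.
Definition negp (x : R) : R := Num.min x 0.

Definition Afun (p q : R) : R := cbrt (p ^+ 2 * q).

Definition Adelta (K L p q : R) : R :=
  Num.sg q * Num.min `|Afun p q| (Num.min (K * `|p|) (L * `|q|)).

Definition Adelta_plus (K L p q : R) : R := Adelta K L (posp p) (posp q).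
Definition Adelta_minus (K L p q : R) : R := Adelta K L (negp p) (negp q).

Definition ND2 (F : R -> R -> R) : Prop :=
  forall p1 q1 p2 q2, p1 <= p2 -> q1 <= q2 -> F p1 q1 <= F p2 q2.
Definition ND2_plus (F : R -> R -> R) : Prop := ND2 F /\ forall p q, 0 <= F p q.
Definition ND2_minus (F : R -> R -> R) : Prop := ND2 F /\ forall p q, F p q <= 0.
End Defs.

(* Main.v *)
Require Import Defs.
From HB Require Import structures.
From mathcomp Require Import all_boot all_order all_algebra.
From mathcomp Require Import all_classical all_reals all_analysis.
From mathcomp Require Import lra.
Import Order.TTheory GRing.Theory Num.Theory.
Local Open Scope ring_scope.

Definition Mf (R : realType) (K L a b : R) : R :=
  Num.min (powR (a ^+ 2 * b) 3%:R^-1) (Num.min (K * a) (L * b)).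

Arguments Mf {R}.

Lemma absA (R : realType) (p q : R) :
  `|Afun p q| = powR (`|p| ^+ 2 * `|q|) 3%:R^-1.
Proof.
rewrite /Afun /cbrt normrM normr_sg (ger0_norm (powR_ge0 _ _)) normrM normrX.
case: eqP => [h|h].
  rewrite mul0r; apply/esym.
  have -> : `|p| ^+ 2 * `|q| = 0.
    by rewrite -normrX -normrM h normr0.
  by rewrite powR0 // invr_eq0 pnatr_eq0.
by rewrite mul1r.
Qed.

Lemma AdeltaE (R : realType) (K L p q : R) :
  Adelta K L p q = Num.sg q * Mf K L `|p| `|q|.
Proof. by rewrite /Adelta absA. Qed.

Lemma Mf_mono (R : realType) (K L a1 b1 a2 b2 : R) : 0 < K -> 0 < L ->
  0 <= a1 -> 0 <= b1 -> a1 <= a2 -> b1 <= b2 -> Mf K L a1 b1 <= Mf K L a2 b2.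
Proof.
move=> hK hL ha hb h1 h2.
have ha2 : 0 <= a2 by apply: le_trans h1.
have hb2 : 0 <= b2 by apply: le_trans h2.
rewrite /Mf !le_min !ge_min; apply/andP; split; last (apply/andP; split).
- apply/orP; left.
  have e1 : 0 <= a1 ^+ 2 * b1 by rewrite mulr_ge0 ?exprn_ge0.
  have e2 : 0 <= a2 ^+ 2 * b2 by rewrite mulr_ge0 ?exprn_ge0.
  have e3 : a1 ^+ 2 * b1 <= a2 ^+ 2 * b2.
    apply: ler_pM => //; rewrite ?exprn_ge0 //.
    by rewrite lerXn2r // ?nnegrE.
  apply: ge0_ler_powR => //; rewrite ?invr_ge0 ?ler0n //.
- by apply/orP; right; apply/orP; left; rewrite ler_pM2l.
- by apply/orP; right; apply/orP; right; rewrite ler_pM2l.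
Qed.

Lemma Mf_ge0 (R : realType) (K L a b : R) : 0 < K -> 0 < L ->
  0 <= a -> 0 <= b -> 0 <= Mf K L a b.
Proof.
move=> hK hL ha hb; rewrite /Mf !le_min powR_ge0 /=.
by rewrite !mulr_ge0 // ltW.
Qed.

Theorem mainTheorem6 (R : realType) (K L : R) (hK : 0 < K) (hL : 0 < L) :
  (forall p q : R,
      - Adelta K L p q = Adelta_plus K L `|p| (- q) + Adelta_minus K L (- `|p|) (- q))
  /\ ND2_plus (Adelta_plus K L) /\ ND2_minus (Adelta_minus K L).
Proof.
split; [|split; [split|split]].
- move=> p q; rewrite /Adelta_plus /Adelta_minus /posp /negp !AdeltaE.
  have hp : Num.max `|p| 0 = `|p| by rewrite max_l.
  have hp' : Num.min (- `|p|) 0 = - `|p| by rewrite min_l // oppr_le0.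
  rewrite hp hp' normrN normr_id.
  have [hq|hq] := leP 0 q.
  + rewrite (max_r (_ : - q <= 0)) ?oppr_le0 // sgr0 mul0r add0r.
    by rewrite min_l ?oppr_le0 // sgrN normrN mulNr.
  + rewrite (max_l (_ : 0 <= - q)) ?oppr_ge0 ?ltW //.
    rewrite (min_r (_ : 0 <= - q)) ?oppr_ge0 ?ltW // sgr0 mul0r addr0.
    by rewrite sgrN normrN mulNr.
- move=> p1 q1 p2 q2 hp hq; rewrite /Adelta_plus /posp !AdeltaE.
  have [h1|h1] := leP q1 0.
    rewrite sgr0 mul0r.
    apply: mulr_ge0; first by case: (leP q2 0) => ?; rewrite ?sgr0 ?gtr0_sg.
    by apply: Mf_ge0.
  have h2 : 0 < q2 by apply: lt_le_trans hq.
  rewrite (max_l (ltW h2)) !gtr0_sg // !mul1r.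
  apply: Mf_mono => //; rewrite ?normr_ge0 //.
    case: (leP p1 0) => a; case: (leP p2 0) => b; rewrite ?normr0 ?normr_ge0 //;
      rewrite ?gtr0_norm //; lra.
  by rewrite !gtr0_norm.
- move=> p q; rewrite /Adelta_plus /posp AdeltaE.
  apply: mulr_ge0; first by case: (leP q 0) => ?; rewrite ?sgr0 ?gtr0_sg.
    by apply: Mf_ge0.
- move=> p1 q1 p2 q2 hp hq; rewrite /Adelta_minus /negp !AdeltaE.
  have [h2|h2] := leP 0 q2.
    rewrite sgr0 mul0r.
    apply: mulr_le0_ge0; first by case: (leP 0 q1) => ?; rewrite ?sgr0 ?ltr0_sg // lerN10.
    by apply: Mf_ge0.
  have h1 : q1 < 0 by apply: le_lt_trans h2.
  rewrite (min_l (ltW h1)) !ltr0_sg // !mulN1r lerN2.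
  apply: Mf_mono => //; rewrite ?normr_ge0 //.
    case: (leP 0 p1) => a; case: (leP 0 p2) => b; rewrite ?normr0 ?normr_ge0 //;
      rewrite ?ltr0_norm //; lra.
  by rewrite !ltr0_norm // lerN2.
- move=> p q; rewrite /Adelta_minus /negp AdeltaE.
  apply: mulr_le0_ge0; first by case: (leP 0 q) => ?; rewrite ?sgr0 ?ltr0_sg // lerN10.
    by apply: Mf_ge0.
Qed.
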